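(* For every LDBA $A$ with $n$ states, of which $n_d$ lie in the deterministic part $Q_d$, there is a deterministic parity automaton $B$ with $\mathsf L(B)=\mathsf L(A)$ having at most $2^{n}\cdot\sum_{i=0}^{n_d}\frac{n_d!}{(n_d-i)!}\le 2^n\cdot e\cdot n_d\cdot n_d!$ states (hence $2^{\mathcal O(n\log n)}$ states) and using at most $2n_d+1$ colors (hence $\mathcal O(n)$ colors).
   Context: A (transition-based) nondeterministic Büchi automaton is $A=(Q,q_0,\Sigma,\delta,\alpha)$ with finite $Q$, $q_0\in Q$, finite alphabet $\Sigma$, total $\delta\subseteq Q\times\Sigma\times Q$, accepting transitions $\alpha\subseteq\delta$; a run is accepting if it uses transitions of $\alpha$ infinitely often. An LDBA additionally has $Q_d\subseteq Q$ with (1) $\alpha\subseteq Q_d\times\Sigma\times Q_d$; (2) each $q\in Q_d$ has exactly one $\sigma$-successor for each $\sigma$; (3) successors of states in $Q_d$ lie in $Q_d$; and $q_0\notin Q_d$. A deterministic parity automaton (DPA) has a deterministic total transition function and a coloring of transitions by positive integers; a word is accepted iff the minimal color seen infinitely often on its run is even. $e$ denotes Euler's number. *)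

(* Defs.v *)
From Stdlib Require Import Reals.
From mathcomp Require Import all_boot.
Set Implicit Arguments. Unset Strict Implicit. Unset Printing Implicit Defensive.

Definition word (Sigma : Type) := nat -> Sigma.

Record NBA (Sigma Q : finType) := {
  nba_init  : Q;
  nba_delta : {set Q * Sigma * Q};
  nba_alpha : {set Q * Sigma * Q};
}.

Definition nba_total (Sigma Q : finType) (A : NBA Sigma Q) : Prop :=
  forall (q : Q) (a : Sigma), exists q' : Q, (q, a, q') \in nba_delta A.

Definition nba_alpha_sub (Sigma Q : finType) (A : NBA Sigma Q) : Prop :=
  nba_alpha A \subset nba_delta A.

Definition nba_wf (Sigma Q : finType) (A : NBA Sigma Q) : Prop :=
  nba_total A /\ nba_alpha_sub A.

Definition nba_run (Sigma Q : finType) (A : NBA Sigma Q) (w : word Sigma)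
  (r : nat -> Q) : Prop :=
  r 0 = nba_init A /\ forall i, (r i, w i, r i.+1) \in nba_delta A.

Definition nba_run_accepting (Sigma Q : finType) (A : NBA Sigma Q) (w : word Sigma)
  (r : nat -> Q) : Prop :=
  forall N, exists i, N <= i /\ (r i, w i, r i.+1) \in nba_alpha A.

Definition nba_accepts (Sigma Q : finType) (A : NBA Sigma Q) (w : word Sigma) : Prop :=
  exists r, nba_run A w r /\ nba_run_accepting A w r.

Definition is_LDBA (Sigma Q : finType) (A : NBA Sigma Q) (Qd : {set Q}) : Prop :=
  nba_wf A /\
  (forall q a q', (q, a, q') \in nba_alpha A -> q \in Qd /\ q' \in Qd) /\
  (forall q a, q \in Qd -> exists q', (q, a, q') \in nba_delta A /\
                  forall q'', (q, a, q'') \in nba_delta A -> q'' = q') /\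
  (forall q a q', q \in Qd -> (q, a, q') \in nba_delta A -> q' \in Qd) /\
  nba_init A \notin Qd.

Record DPA (Sigma S : finType) := {
  dpa_init  : S;
  dpa_trans : S -> Sigma -> S;
  dpa_color : S -> Sigma -> nat;
}.

Definition dpa_colors_positive (Sigma S : finType) (B : DPA Sigma S) : Prop :=
  forall s a, 0 < dpa_color B s a.

Fixpoint dpa_run (Sigma S : finType) (B : DPA Sigma S) (w : word Sigma) (i : nat) : S :=
  match i with
  | 0 => dpa_init B
  | i'.+1 => dpa_trans B (dpa_run B w i') (w i')
  end.

Definition dpa_color_at (Sigma S : finType) (B : DPA Sigma S) (w : word Sigma) (i : nat) : nat :=
  dpa_color B (dpa_run B w i) (w i).

Definition inf_often_color (Sigma S : finType) (B : DPA Sigma S) (w : word Sigma) (c : nat) : Prop :=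
  forall N, exists i, N <= i /\ dpa_color_at B w i = c.

Definition dpa_accepts (Sigma S : finType) (B : DPA Sigma S) (w : word Sigma) : Prop :=
  exists c, inf_often_color B w c /\
            (forall c', inf_often_color B w c' -> c <= c') /\
            ~~ odd c.

Definition dpa_num_colors (Sigma S : finType) (B : DPA Sigma S) : nat :=
  size (undup [seq dpa_color B p.1 p.2 | p : S * Sigma]).

Definition ldba_sum (nd : nat) : nat :=
  \sum_(i < nd.+1) (nd`! %/ (nd - i)`!).

Definition e_bound (n nd : nat) : Prop :=
  Rle (INR (2 ^ n * ldba_sum nd))
      (Rmult (Rmult (Rmult (INR (2 ^ n)) (exp 1)) (INR nd)) (INR (nd`!))).

(* Main.v *)
Require Import Defs.
From Stdlib Require Import Reals Classical Lra.
From mathcomp Require Import all_boot zify.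
Set Implicit Arguments. Unset Strict Implicit. Unset Printing Implicit Defensive.

Fixpoint dd (T : eqType) (seen s : seq T) : seq T :=
  match s with
  | [::] => [::]
  | x :: s' => if x \in seen then dd seen s' else x :: dd (x :: seen) s'
  end.

Lemma dd_mem (T : eqType) (s seen : seq T) x :
  (x \in dd seen s) = (x \in s) && (x \notin seen).
Proof.
elim: s seen => [|y s IH] seen //=.
case Hy: (y \in seen) => /=.
  rewrite IH in_cons; case: (eqVneq x y) => [->|_] //=; by rewrite Hy /= andbF.
rewrite in_cons IH !in_cons; case: (eqVneq x y) => [->|_] //=; by rewrite Hy.
Qed.

Lemma dd_uniq (T : eqType) (s seen : seq T) : uniq (dd seen s).
Proof.
elim: s seen => [|y s IH] seen //=.
case Hy: (y \in seen); first exact: IH.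
by rewrite /= IH dd_mem in_cons eqxx /= andbF.
Qed.

Lemma dd_eq_mem (T : eqType) (s seen1 seen2 : seq T) :
  seen1 =i seen2 -> dd seen1 s = dd seen2 s.
Proof.
elim: s seen1 seen2 => [|y s IH] seen1 seen2 E //=.
rewrite E; case: (y \in seen2); first exact: IH.
congr (_ :: _); apply: IH => z; by rewrite !in_cons E.
Qed.

Lemma dd_cat (T : eqType) (s1 s2 seen : seq T) :
  dd seen (s1 ++ s2) = dd seen s1 ++ dd (s1 ++ seen) s2.
Proof.
elim: s1 seen => [|y s1 IH] seen //=.
case Hy: (y \in seen) => /=.
  rewrite IH; congr (_ ++ _); apply: dd_eq_mem => z.
  rewrite in_cons !mem_cat; case: (eqVneq z y) => [->|] //=; by rewrite Hy orbT.
rewrite IH; congr (_ :: _ ++ _); apply: dd_eq_mem => z.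
by rewrite !mem_cat !in_cons !mem_cat orbCA.
Qed.

Lemma dd_id (T : eqType) (s seen : seq T) :
  uniq s -> (forall x, x \in s -> x \notin seen) -> dd seen s = s.
Proof.
elim: s seen => [|y s IH] seen //= /andP [Hy Hu] Hd.
rewrite (negbTE (Hd y (mem_head _ _))); congr (_ :: _); apply: IH => // x Hx.
rewrite in_cons negb_or Hd ?andbT; last by rewrite in_cons Hx orbT.
by apply/eqP => E; rewrite -E Hx in Hy.
Qed.

Lemma size_dd_le (T : eqType) (s : seq T) : size (dd [::] s) <= size s.
Proof. apply: uniq_leq_size; first exact: dd_uniq. by move=> x; rewrite dd_mem andbT. Qed.

Lemma size_dd_lt (T : eqType) (s : seq T) : ~~ uniq s -> size (dd [::] s) < size s.
Proof.
move=> Hu; rewrite ltn_neqAle size_dd_le andbT.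
have := uniq_size_uniq (dd_uniq s [::]) (s2 := s).
rewrite (negbTE Hu) => H; rewrite eq_sym -H // => x; by rewrite dd_mem andbT.
Qed.

Lemma uniq_take_nth (T : eqType) (x0 : T) (s : seq T) k : k <= size s ->
  uniq (take k s) <-> (forall i, i < k -> nth x0 s i \notin take i s).
Proof.
elim: k => [|k IH] Hk; first by rewrite take0; split => // _ i.
have Hk' : k <= size s by exact: ltnW.
rewrite (take_nth x0) // rcons_uniq; split.
  move=> /andP [H1 H2] i; rewrite ltnS leq_eqVlt => /orP [/eqP ->|Hi] //.
  by apply: (proj1 (IH Hk')).
move=> H; apply/andP; split; first exact: H.
by apply/(IH Hk') => i Hi; apply: H; apply: ltnW.
Qed.

Lemma fm_le (s : seq nat) D x : x \in s -> foldr minn D s <= x.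
Proof.
elim: s => [|y s IH] //=; rewrite in_cons => /orP [/eqP ->|Hx].
  by rewrite geq_minl.
by rewrite geq_min IH ?orbT.
Qed.

Lemma fm_leD (s : seq nat) D : foldr minn D s <= D.
Proof. elim: s => [|y s IH] //=; by rewrite geq_min IH orbT. Qed.

Lemma fm_cases (s : seq nat) D : foldr minn D s = D \/ foldr minn D s \in s.
Proof.
elim: s => [|y s IH] /=; first by left.
rewrite /minn; case: ifP => _; first by right; rewrite mem_head.
case: IH => H; [by left | by right; rewrite in_cons H orbT].
Qed.

Definition io (f : nat -> nat) (c : nat) := forall N, exists i, N <= i /\ f i = c.

Lemma not_io f c : ~ io f c -> exists N, forall i, N <= i -> f i <> c.
Proof.
move=> H; apply: NNPP => H1; apply: H => N; apply: NNPP => H2; apply: H1.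
exists N => i Hi E; apply: H2; by exists i.
Qed.

Lemma eventually_ge f c : (forall c', c' < c -> ~ io f c') ->
  exists T, forall t, T <= t -> c <= f t.
Proof.
elim: c => [|c IH] H; first by exists 0.
have [T1 H1] := IH (fun c' Hc => H c' (ltnW Hc)).
have [T2 H2] := not_io (H c (ltnSn c)).
exists (maxn T1 T2) => t Ht; rewrite ltn_neqAle H1; last first.
  by apply: leq_trans Ht; rewrite leq_maxl.
rewrite andbT; apply/eqP => E; apply: (H2 t); last by [].
by apply: leq_trans Ht; rewrite leq_maxr.
Qed.

Lemma pigeon f B : (forall N, exists i, N <= i /\ f i <= B) ->
  exists c, c <= B /\ io f c.
Proof.
elim: B => [|B IH] H.
  exists 0; split => // N; have [i [Hi Hf]] := H N; exists i; split => //.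
  by apply/eqP; rewrite -leqn0.
case: (classic (io f B.+1)) => Hio; first by exists B.+1.
have [N0 HN0] := not_io Hio.
have [c [Hc Hio']] : exists c, c <= B /\ io f c.
  apply: IH => N; have [i [Hi Hf]] := H (maxn N N0); exists i; split.
    by apply: leq_trans Hi; rewrite leq_maxl.
  rewrite -ltnS ltn_neqAle Hf andbT; apply/eqP; apply: HN0.
  by apply: leq_trans Hi; rewrite leq_maxr.
by exists c; split => //; apply: leq_trans Hc _.
Qed.

Lemma ex_min (P : nat -> Prop) c0 : P c0 -> exists c, P c /\ forall c', P c' -> c <= c'.
Proof.
elim/ltn_ind: c0 => c0 IH Hc0.
case: (classic (exists c', c' < c0 /\ P c')) => [[c' [Hlt Hc']]|Hn].
  exact: (IH c').
exists c0; split => // c' Hc'; rewrite leqNgt; apply/negP => Hlt; apply: Hn; by exists c'.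
Qed.

Lemma stabilize (f : nat -> nat) k : (forall t, k <= t -> f t.+1 <= f t) ->
  exists T, k <= T /\ forall t, T <= t -> f t = f T.
Proof.
move Hn : (f k) => n; elim/ltn_ind: n k Hn => n IH k Hn Hdec.
have Hle : forall t, k <= t -> f t <= f k.
  move=> t; elim: t => [|t IHt]; first by rewrite leqn0 => /eqP ->.
  rewrite leq_eqVlt => /orP [/eqP <-|Ht] //; exact: leq_trans (Hdec _ Ht) (IHt Ht).
case: (classic (exists t, k <= t /\ f t <> f k)) => [[t [Ht Hne]]|Hn'].
  have Hlt : f t < n by rewrite -Hn ltn_neqAle Hle // andbT; apply/eqP.
  have [T [HT H]] := IH _ Hlt t erefl (fun t' Ht' => Hdec t' (leq_trans Ht Ht')).
  by exists T; split => //; apply: leq_trans HT.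
exists k; split => // t Ht; apply: NNPP => Hne; apply: Hn'; by exists t.
Qed.

Section Constr.
Variables (Sigma Q : finType) (A : NBA Sigma Q) (Qd : {set Q}).
Hypothesis HA : is_LDBA A Qd.

Definition q0 := nba_init A.
Definition succ (q : Q) (a : Sigma) : Q := odflt q [pick q' | (q, a, q') \in nba_delta A].

Lemma succ_delta q a : (q, a, succ q a) \in nba_delta A.
Proof.
rewrite /succ; case: pickP => [q' //|H].
have [q' Hq'] := (proj1 (proj1 HA)) q a.
by rewrite H in Hq'.
Qed.

Lemma succ_uniq q a q' : q \in Qd -> (q, a, q') \in nba_delta A -> q' = succ q a.
Proof.
move=> Hq Hd; have [_ [_ [H2 _]]] := HA.
have [p [_ Hp]] := H2 q a Hq.
by rewrite (Hp _ Hd) (Hp _ (succ_delta q a)).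
Qed.

Lemma delta_Qd q a q' : q \in Qd -> (q, a, q') \in nba_delta A -> q' \in Qd.
Proof. by have [_ [_ [_ [H3 _]]]] := HA; apply: H3. Qed.

Lemma succ_Qd q a : q \in Qd -> succ q a \in Qd.
Proof. move=> Hq; exact: delta_Qd Hq (succ_delta q a). Qed.

Lemma q0_notQd : q0 \notin Qd.
Proof. by have [_ [_ [_ [_ H]]]] := HA. Qed.

Lemma alpha_Qd q a q' : (q, a, q') \in nba_alpha A -> q \in Qd /\ q' \in Qd.
Proof. by have [_ [H1 _]] := HA; apply: H1. Qed.

Lemma alpha_delta q a q' : (q, a, q') \in nba_alpha A -> (q, a, q') \in nba_delta A.
Proof. by have [[_ H] _] := HA; move=> Hx; apply: (subsetP H). Qed.

Definition nd := #|Qd|.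
Definition adv (l : seq Q) (a : Sigma) := [seq succ q a | q <- l].
Definition Nsucc (N : {set Q}) (a : Sigma) (q' : Q) :=
  [exists q, (q \in N) && ((q, a, q') \in nba_delta A)].

Definition rstep (x : {set Q} * seq Q) (a : Sigma) : {set Q} * seq Q :=
  let l1 := dd [::] (adv x.2 a) in
  ([set q' | Nsucc x.1 a q' && (q' \notin Qd)],
   l1 ++ [seq q' <- enum Qd | Nsucc x.1 a q' && (q' \notin l1)]).

Definition ev (l : seq Q) (a : Sigma) (i : nat) : nat :=
  if nth q0 (adv l a) i \in take i (adv l a) then (2 * i).+1
  else if (nth q0 l i, a, nth q0 (adv l a) i) \in nba_alpha A then (2 * i).+2
  else (2 * nd).+1.

Definition rcolor (x : {set Q} * seq Q) (a : Sigma) : nat :=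
  foldr minn (2 * nd).+1 [seq ev x.2 a i | i <- iota 0 (size x.2)].

Definition PS := permutations (enum Qd).
Definition St := ({set Q} * seq_sub PS)%type.

Lemma p0P : enum Qd \in PS.
Proof. by rewrite /PS mem_permutations. Qed.
Definition p0 : seq_sub PS := SeqSub p0P.

Definition enc (x : {set Q} * seq Q) : St :=
  (x.1 :|: [set q in x.2],
   insubd p0 (x.2 ++ [seq q <- enum Qd | q \notin x.2])).

Definition dec (s : St) : {set Q} * seq Q :=
  ([set q in s.1 | q \notin Qd], [seq q <- ssval s.2 | q \in s.1]).

Definition valid (x : {set Q} * seq Q) :=
  [/\ forall q, q \in x.1 -> q \notin Qd, uniq x.2 & forall q, q \in x.2 -> q \in Qd].

Lemma dec_valid s : valid (dec s).
Proof.
case: s => X [p Hp] /=; split => /=.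
- by move=> q; rewrite inE => /andP [].
- by apply: filter_uniq; rewrite (perm_uniq (_ : perm_eq p (enum Qd))) ?enum_uniq // -mem_permutations.
- move=> q; rewrite mem_filter => /andP [_ Hq].
  by rewrite -mem_enum -(perm_mem (_ : perm_eq p (enum Qd))) // -mem_permutations.
Qed.

Lemma dec_enc x : valid x -> dec (enc x) = x.
Proof.
case: x => N l [/= HN Hu Hl].
rewrite /dec /enc /=.
set r := l ++ _.
have Hr : r \in PS.
  rewrite /PS mem_permutations; apply: uniq_perm.
  - rewrite cat_uniq Hu filter_uniq ?enum_uniq // andbT /=.
    by apply/hasPn => q; rewrite mem_filter => /andP [].
  - exact: enum_uniq.
  - move=> q; rewrite mem_cat mem_filter mem_enum.
    case Hq: (q \in l) => /=; first by rewrite Hl.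
    by [].
rewrite val_insubd Hr; congr (_, _).
  apply/setP => q; rewrite !inE; case Hq: (q \in N) => /=; first by rewrite HN.
  by case Hql: (q \in l) => //=; rewrite Hl.
rewrite filter_cat (_ : [seq q <- l | q \in N :|: [set q in l]] = l); last first.
  by apply/all_filterP/allP => q Hq; rewrite !inE Hq orbT.
rewrite (_ : [seq q <- _ | _] = [::]) ?cats0 //.
apply/eqP; rewrite -(filter_pred0 [seq q <- enum Qd | q \notin l]) ; apply/eqP.
apply: eq_in_filter => q; rewrite mem_filter mem_enum => /andP [Hq HQ].
rewrite !inE (negbTE Hq) orbF; apply/negbTE; apply/negP => HqN.
by move: (HN q HqN); rewrite HQ.
Qed.


Lemma rstep_valid x a : valid x -> valid (rstep x a).
Proof.
case: x => N l [/= HN Hu Hl]; split => /=.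
- by move=> q; rewrite inE => /andP [].
- rewrite cat_uniq dd_uniq filter_uniq ?enum_uniq // andbT /=.
  by apply/hasPn => q; rewrite mem_filter => /andP [/andP []].
- move=> q; rewrite mem_cat mem_filter mem_enum dd_mem andbT => /orP [|/andP [] //].
  by move=> /mapP [p Hp ->]; apply: succ_Qd; apply: Hl.
Qed.

Definition B : DPA Sigma St :=
  {| dpa_init := enc ([set q0], [::]);
     dpa_trans := fun s a => enc (rstep (dec s) a);
     dpa_color := fun s a => rcolor (dec s) a |}.

Definition R (w : word Sigma) t := dec (dpa_run B w t).

Lemma R0 w : R w 0 = ([set q0], [::]).
Proof.
rewrite /R /= dec_enc //; split => //= q; rewrite inE => /eqP ->; exact: q0_notQd.
Qed.

Lemma RS w t : R w t.+1 = rstep (R w t) (w t).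
Proof. by rewrite /R /= dec_enc //; apply: rstep_valid; apply: dec_valid. Qed.

Lemma R_valid w t : valid (R w t).
Proof. exact: dec_valid. Qed.

Lemma col_R w t : dpa_color_at B w t = rcolor (R w t) (w t).
Proof. by []. Qed.

Definition reach (w : word Sigma) t q := exists r : nat -> Q,
  [/\ r 0 = q0, forall i, i < t -> (r i, w i, r i.+1) \in nba_delta A & r t = q].

Lemma reach_ext w t p q : reach w t p -> (p, w t, q) \in nba_delta A -> reach w t.+1 q.
Proof.
move=> [r [H0 Hi Ht]] Hd; exists (fun i => if i == t.+1 then q else r i); split.
- by [].
- move=> i Hlt; rewrite (ltn_eqF Hlt); case: (eqVneq i.+1 t.+1) => [[E]|Hne].
    by rewrite E Ht.
  apply: Hi; rewrite ltn_neqAle -ltnS Hlt andbT; apply/eqP => E.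
  by rewrite E eqxx in Hne.
- by rewrite eqxx.
Qed.

Lemma R_reach w t : (forall q, q \in (R w t).1 -> reach w t q) /\
                    (forall q, q \in (R w t).2 -> reach w t q).
Proof.
elim: t => [|t [IH1 IH2]].
  rewrite R0; split => //= q; rewrite inE => /eqP ->.
  by exists (fun _ => q0); split.
have HN : forall q, Nsucc (R w t).1 (w t) q -> reach w t.+1 q.
  by move=> q /existsP [p /andP [Hp Hd]]; apply: reach_ext (IH1 p Hp) Hd.
rewrite RS; split => q /=.
  by rewrite inE => /andP [/HN].
rewrite mem_cat dd_mem andbT mem_filter => /orP [/mapP [p Hp ->]|/andP [/andP [/HN //]]].
exact: reach_ext (IH2 p Hp) (succ_delta _ _).
Qed.

Lemma size_valid x : valid x -> size x.2 <= nd.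
Proof.
case=> _ Hu Hl; rewrite /nd cardE; apply: uniq_leq_size => // q Hq.
by rewrite mem_enum; apply: Hl.
Qed.


Lemma rcolor_le x a i : i < size x.2 -> rcolor x a <= ev x.2 a i.
Proof. move=> Hi; apply: fm_le; apply: map_f; by rewrite mem_iota. Qed.

Lemma rcolor_cases x a : rcolor x a = (2 * nd).+1 \/
  exists i, i < size x.2 /\ rcolor x a = ev x.2 a i.
Proof.
case: (fm_cases [seq ev x.2 a i | i <- iota 0 (size x.2)] (2 * nd).+1) => H; first by left.
right; move: H => /mapP [i Hi E]; exists i; split => //.
by move: Hi; rewrite mem_iota.
Qed.

Lemma rcolor_bounds x a : 0 < rcolor x a <= (2 * nd).+1.
Proof.
rewrite fm_leD andbT; case: (rcolor_cases x a) => [->|[i [_ ->]]] //.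
by rewrite /ev; case: ifP => _ //; case: ifP.
Qed.

Lemma stable_step x a m : m < size x.2 ->
  (forall i, i <= m -> nth q0 (adv x.2 a) i \notin take i (adv x.2 a)) ->
  m < size (rstep x a).2 /\ nth q0 (rstep x a).2 m = succ (nth q0 x.2 m) a.
Proof.
move=> Hm Hnd; set s := adv x.2 a.
have Hs : size s = size x.2 by rewrite size_map.
have Hu : uniq (take m.+1 s).
  by apply/(uniq_take_nth q0) => [|i Hi]; [rewrite Hs | apply: Hnd].
have E : (rstep x a).2 = take m.+1 s ++ (dd (take m.+1 s ++ [::]) (drop m.+1 s) ++
           [seq q' <- enum Qd | Nsucc x.1 a q' && (q' \notin dd [::] s)]).
  rewrite /rstep /= -/s -{1}(cat_take_drop m.+1 s) dd_cat dd_id // -catA //.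
have Hsz : size (take m.+1 s) = m.+1 by rewrite size_takel // Hs.
rewrite E size_cat Hsz nth_cat Hsz ltnSn nth_take // /s (nth_map q0) //; split => //.
by rewrite ltnS leq_addr.
Qed.

Lemma pos_step x a q : q \in x.2 ->
  [/\ succ q a \in (rstep x a).2,
      index (succ q a) (rstep x a).2 <= index q x.2 &
      (~~ uniq (take (index q x.2).+1 (adv x.2 a)) ->
        index (succ q a) (rstep x a).2 < index q x.2)].
Proof.
move=> Hq; set p := index q x.2; set s := adv x.2 a.
have Hp : p < size x.2 by rewrite index_mem.
have Hs : size s = size x.2 by rewrite size_map.
have Hy : succ q a = nth q0 s p by rewrite /s (nth_map q0) // nth_index.
have Hyt : succ q a \in take p.+1 s.
  by rewrite (take_nth q0) ?Hs // mem_rcons Hy mem_head.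
have E : (rstep x a).2 = dd [::] (take p.+1 s) ++ (dd (take p.+1 s ++ [::]) (drop p.+1 s) ++
           [seq q' <- enum Qd | Nsucc x.1 a q' && (q' \notin dd [::] s)]).
  by rewrite /rstep /= -/s -{1}(cat_take_drop p.+1 s) dd_cat -catA.
have Hyd : succ q a \in dd [::] (take p.+1 s) by rewrite dd_mem Hyt.
have Hi : index (succ q a) (rstep x a).2 < size (dd [::] (take p.+1 s)).
  by rewrite E index_cat Hyd index_mem.
have Hsz : size (take p.+1 s) = p.+1 by rewrite size_takel // Hs.
split.
- by rewrite E mem_cat Hyd.
- rewrite -ltnS; apply: leq_trans Hi _; exact: leq_trans (size_dd_le _) (eq_leq Hsz).
- move=> Hnu; apply: leq_trans Hi _; rewrite -ltnS.
  exact: leq_trans (size_dd_lt Hnu) (eq_leq Hsz).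
Qed.


Lemma dpa_to_nba w : dpa_accepts B w -> nba_accepts A w.
Proof.
move=> [c [Hinf [Hmin Hev]]].
have [T HT] : exists T, forall t, T <= t -> c <= dpa_color_at B w t.
  apply: eventually_ge => c' Hc' Hio; move: (Hmin c' Hio); rewrite leqNgt Hc'; done.
have [t0 [Ht0 Hc0]] := Hinf T.
have [m [Hm Hcm]] : exists m, m < size (R w t0).2 /\ c = (2 * m).+2.
  move: Hc0; rewrite col_R; case: (rcolor_cases (R w t0) (w t0)) => [->|[i [Hi ->]]] Hc.
    by move: Hev; rewrite -Hc /= oddM.
  move: Hc; rewrite /ev; case: ifP => _ Hc.
    by move: Hev; rewrite -Hc /= oddM.
  move: Hc; case: ifP => _ Hc'; first by exists i.
  by move: Hev; rewrite -Hc' /= oddM.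
have Hnd : forall t, t0 <= t -> forall i, i <= m -> i < size (R w t).2 ->
    nth q0 (adv (R w t).2 (w t)) i \notin take i (adv (R w t).2 (w t)).
  move=> t Ht i Him Hi; apply/negP => Hd.
  have := leq_trans (HT t (leq_trans Ht0 Ht)) (rcolor_le (w t) Hi).
  rewrite /ev Hd Hcm; lia.
have Hsz : forall d, m < size (R w (t0 + d)).2.
  elim => [|d IH]; first by rewrite addn0.
  rewrite addnS RS; apply: (proj1 (stable_step IH _)) => i Hi.
  apply: Hnd => //; [exact: leq_addr | exact: leq_ltn_trans Hi IH].
have Hsz' : forall t, t0 <= t -> m < size (R w t).2.
  by move=> t Ht; rewrite -(subnKC Ht); apply: Hsz.
have Hst : forall t, t0 <= t -> nth q0 (R w t.+1).2 m = succ (nth q0 (R w t).2 m) (w t).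
  move=> t Ht; rewrite RS; apply: (proj2 (stable_step (Hsz' t Ht) _)) => i Hi.
  apply: Hnd => //; exact: leq_ltn_trans Hi (Hsz' t Ht).
have [r0 [H0 Hr0 Hrt]] := (proj2 (R_reach w t0)) _ (mem_nth q0 Hm).
pose r i := if i <= t0 then r0 i else nth q0 (R w i).2 m.
have Hr : forall i, t0 <= i -> r i = nth q0 (R w i).2 m.
  move=> i Hi; rewrite /r; case: ifP => H //.
  have -> : i = t0 by apply/eqP; rewrite eqn_leq H Hi.
  exact: Hrt.
have Hrun : forall i, t0 <= i -> (r i, w i, r i.+1) \in nba_delta A.
  move=> i Hi; rewrite Hr // Hr ?(leq_trans Hi) // Hst //; exact: succ_delta.
exists r; split; first split.
- by rewrite /r leq0n.
- move=> i; case: (ltnP i t0) => Hi; last exact: Hrun.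
  by rewrite /r Hi ltnW //; apply: Hr0.
- move=> N; have [t [Ht Hct]] := Hinf (maxn N t0).
  have HtN : N <= t by apply: leq_trans Ht; rewrite leq_maxl.
  have Htt : t0 <= t by apply: leq_trans Ht; rewrite leq_maxr.
  exists t; split => //; rewrite Hr // Hr ?(leq_trans Htt) // Hst //.
  move: Hct; rewrite col_R; case: (rcolor_cases (R w t) (w t)) => [->|[i [Hi ->]]].
    rewrite Hcm; lia.
  rewrite /ev; case: ifP => _; first by rewrite Hcm; lia.
  case: ifP => Hacc; last by rewrite Hcm; lia.
  rewrite Hcm => /eqP; rewrite !eqSS eqn_pmul2l // => /eqP Eim.
  by move: Hacc; rewrite Eim /adv (nth_map q0) // -Eim.
Qed.


Lemma nba_to_dpa w : nba_accepts A w -> dpa_accepts B w.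
Proof.
move=> [r [[H0 Hrun] Hacc]].
have Hex : exists k, r k \in Qd.
  have [i [_ Ha]] := Hacc 0; exists i; exact: (alpha_Qd Ha).1.
have [k Hk Hkmin] := ex_minnP Hex.
case: k Hk Hkmin => [|k] Hk Hkmin; first by rewrite H0 (negbTE q0_notQd) in Hk.
have Hk' : r k \notin Qd.
  by apply/negP => H; have := Hkmin k H; rewrite ltnn.
have HQd : forall d, r (k.+1 + d) \in Qd.
  elim => [|d IH]; first by rewrite addn0.
  by rewrite addnS; apply: delta_Qd IH (Hrun _).
have HQd' : forall t, k.+1 <= t -> r t \in Qd.
  by move=> t Ht; rewrite -(subnKC Ht); apply: HQd.
have HN : forall t, r t \notin Qd -> r t \in (R w t).1.
  elim => [|t IH] Hn; first by rewrite R0 H0 inE.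
  have Hn' : r t \notin Qd.
    by apply/negP => H; move: Hn; rewrite (delta_Qd H (Hrun t)).
  rewrite RS inE Hn andbT; apply/existsP; exists (r t); by rewrite IH // Hrun.
have Hnext : forall t, k.+1 <= t -> r t.+1 = succ (r t) (w t).
  by move=> t Ht; apply: succ_uniq (HQd' t Ht) (Hrun t).
have HL0 : forall d, r (k.+1 + d) \in (R w (k.+1 + d)).2.
  elim => [|d IH].
    rewrite addn0 RS /= mem_cat mem_filter mem_enum Hk andbT.
    case: (r k.+1 \in dd [::] _) => //=; rewrite andbT.
    by apply/existsP; exists (r k); rewrite HN // Hrun.
  rewrite addnS RS Hnext ?leq_addr //.
  by case: (pos_step (w (k.+1 + d)) IH).
have HL : forall t, k.+1 <= t -> r t \in (R w t).2.
  by move=> t Ht; rewrite -(subnKC Ht); apply: HL0.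
pose pos t := index (r t) (R w t).2.
have Hdec : forall t, k.+1 <= t -> pos t.+1 <= pos t.
  move=> t Ht; rewrite /pos RS Hnext //.
  by case: (pos_step (w t) (HL t Ht)).
have [T [HkT HT]] := stabilize Hdec.
set p := pos T.
have HLT : forall t, T <= t -> r t \in (R w t).2.
  by move=> t Ht; apply: HL; apply: leq_trans Ht.
have Hps : forall t, T <= t -> p < size (R w t).2 /\ nth q0 (R w t).2 p = r t.
  move=> t Ht; rewrite /p -(HT t Ht) /pos index_mem nth_index; last exact: HLT.
  by split => //; apply: HLT.
have Hnod : forall t, T <= t -> forall i, i <= p ->
    nth q0 (adv (R w t).2 (w t)) i \notin take i (adv (R w t).2 (w t)).
  move=> t Ht i Hi; apply/negP => Hd.
  have Hnu : ~~ uniq (take (pos t).+1 (adv (R w t).2 (w t))).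
    apply/negP => Hu.
    have Hsz : (pos t).+1 <= size (adv (R w t).2 (w t)).
      by rewrite size_map /pos index_mem HLT.
    have Hi' : i < (pos t).+1 by rewrite (HT t Ht) ltnS.
    by move: ((proj1 (uniq_take_nth q0 Hsz) Hu) i Hi'); rewrite Hd.
  have [_ _ H3] := pos_step (w t) (HLT t Ht).
  have := H3 Hnu; rewrite -RS -Hnext ?(leq_trans HkT) //.
  rewrite -/(pos t.+1) -/(pos t) (HT t Ht) (HT t.+1) ?ltnn //.
  exact: leq_trans Ht (leqnSn t).
have Hsmall : forall t, T <= t -> (r t, w t, r t.+1) \in nba_alpha A ->
    dpa_color_at B w t <= (2 * p).+2.
  move=> t Ht Ha; have [Hp Hn] := Hps t Ht.
  rewrite col_R; apply: leq_trans (rcolor_le _ Hp) _.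
  rewrite /ev (negbTE (Hnod t Ht p (leqnn p))) /adv (nth_map q0) // Hn.
  by rewrite -Hnext ?Ha // (leq_trans HkT).
have Hodd : forall t, T <= t -> odd (dpa_color_at B w t) ->
    (2 * p).+3 <= dpa_color_at B w t.
  move=> t Ht; have [Hp _] := Hps t Ht.
  have Hpn : p < nd := leq_trans Hp (size_valid (R_valid w t)).
  rewrite col_R; case: (rcolor_cases (R w t) (w t)) => [->|[i [Hi ->]]] Ho.
    lia.
  move: Ho; rewrite /ev; case: ifP => Hd.
    move=> _; case: (leqP i p) => Hip; last by lia.
    by move: (Hnod t Ht i Hip); rewrite Hd.
  case: ifP => _; last by move=> _; lia.
  by rewrite /= oddM.
have [c0 [Hc0 Hio0]] : exists c, c <= (2 * p).+2 /\ io (dpa_color_at B w) c.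
  apply: pigeon => N; have [t [Ht Ha]] := Hacc (maxn N T).
  exists t; split; first by apply: leq_trans Ht; rewrite leq_maxl.
  by apply: Hsmall Ha; apply: leq_trans Ht; rewrite leq_maxr.
have [c [Hio Hmin]] := ex_min Hio0.
exists c; split; first exact: Hio.
split; first exact: Hmin.
apply/negP => Hoc.
have Hcle : c <= (2 * p).+2 := leq_trans (Hmin _ Hio0) Hc0.
have [t [Ht Hct]] := Hio T.
have := Hodd t Ht; rewrite Hct Hoc => /(_ isT); lia.
Qed.

End Constr.

Lemma ldba_sum_ge n : n`! <= ldba_sum n.
Proof. by rewrite /ldba_sum big_ord_recr /= subnn fact0 divn1 leq_addl. Qed.

Lemma ldba_sum_le n : ldba_sum n <= n.+1 * n`!.
Proof.
rewrite /ldba_sum.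
have H : \sum_(i < n.+1) (n`! %/ (n - i)`!) <= \sum_(i < n.+1) n`!.
  by apply: leq_sum => i _; exact: leq_div.
apply: leq_trans H _.
by rewrite big_const_ord iter_addn_0 mulnC.
Qed.

Lemma e_ge2 : Rle (INR 2) (exp 1).
Proof. have := exp_ineq1_le 1; simpl; lra. Qed.

Lemma real_step (a b c e : Rdefinitions.R) : Rle 0 a -> Rle 0 b -> Rle 0 c -> Rle (INR 2) e ->
  Rle (Rmult a (Rmult (INR 2) (Rmult b c))) (Rmult (Rmult (Rmult a e) b) c).
Proof.
move=> Ha Hb Hc He.
have Hx : Rle 0 (Rmult a (Rmult b c)) by apply: Rmult_le_pos => //; apply: Rmult_le_pos.
have E1 : Rmult a (Rmult (INR 2) (Rmult b c)) = Rmult (INR 2) (Rmult a (Rmult b c)) by ring.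
have E2 : Rmult (Rmult (Rmult a e) b) c = Rmult e (Rmult a (Rmult b c)) by ring.
rewrite E1 E2; exact: Rmult_le_compat_r.
Qed.

Lemma ebound n nd : 0 < nd -> e_bound n nd.
Proof.
move=> Hnd; rewrite /e_bound.
have H1 : 2 ^ n * ldba_sum nd <= 2 ^ n * (2 * (nd * nd`!)).
  rewrite leq_mul2l; apply/orP; right; apply: leq_trans (ldba_sum_le nd) _.
  rewrite mulnA leq_mul2r; apply/orP; right; lia.
apply: Rle_trans (le_INR _ _ (elimT leP H1)) _.
rewrite !mult_INR; apply: real_step; try apply: pos_INR.
exact: e_ge2.
Qed.

Lemma card_setQ (Q : finType) : #|{: {set Q}}| = 2 ^ #|Q|.
Proof. by rewrite -[#|Q|]cardsT -card_powerset powersetT cardsT. Qed.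

Theorem mainTheorem4 (Sigma Q : finType) (A : NBA Sigma Q) (Qd : {set Q}) :
  is_LDBA A Qd ->
  (exists (S : finType) (B : DPA Sigma S),
     dpa_colors_positive B /\
     (forall w : word Sigma, dpa_accepts B w <-> nba_accepts A w) /\
     #|S| <= 2 ^ #|Q| * ldba_sum #|Qd| /\
     dpa_num_colors B <= 2 * #|Qd| + 1) /\
  (0 < #|Qd| -> e_bound #|Q| #|Qd|).
Proof.
move=> HA; split; last exact: ebound.
exists (St Qd), (B A Qd); split; [|split; [|split]].
- by move=> s a; case/andP: (rcolor_bounds A Qd (dec s) a).
- move=> w; split; [exact: (dpa_to_nba HA) | exact: (nba_to_dpa HA)].
- rewrite card_prod card_setQ card_seq_sub ?permutations_uniq //.
  rewrite size_permutations ?enum_uniq // -cardE leq_mul2l ldba_sum_ge orbT //.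
- rewrite /dpa_num_colors addn1.
  have -> : (2 * #|Qd|).+1 = size (iota 1 (2 * nd Qd).+1) by rewrite size_iota.
  apply: uniq_leq_size; first exact: undup_uniq.
  move=> y; rewrite mem_undup => /mapP [[s a] _ ->].
  rewrite mem_iota add1n ltnS; exact: rcolor_bounds.
Qed.
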